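(* Let $(A,d)$ and $(A',d')$ be unital dg-algebras over $\mathbb{R}$, let $l\ge 2$, and let $f_i\in \mathrm{Hom}^0(A[1]^{\otimes i},A'[1])$, $i=1,\dots,l-1$, be linear maps such that $f_1$ is unital, i.e. $f_1(1)=1$, and $f_2,\dots,f_{l-1}$ are normal. Define the multilinear map $\Psi_l[f_1,\dots,f_{l-1}]: A[1]^{\otimes l}\to A'[1]$ by $$\Psi_l[f_1,\ldots,f_{l-1}](a_1,\ldots,a_l)=\sum_{i=1}^{l-1}(-1)^{\bar a_1+\cdots+\bar a_i}f_{l-1}(a_1,\ldots,a_ia_{i+1},\ldots,a_l)-\sum_{i=1}^{l-1}(-1)^{\bar a_1+\cdots+\bar a_i}f_i(a_1,\ldots,a_i)\,f_{l-i}(a_{i+1},\ldots,a_l)$$ for homogeneous $a_1,\dots,a_l$, where products are taken in $A$ resp. $A'$. Then $\Psi_l[f_1,\dots,f_{l-1}]$ is normal.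
   Context: For a graded vector space $A=\bigoplus A_n$, the shifted space $A[1]$ has $A[1]_n=A_{n+1}$; for homogeneous $a$ one writes $\bar a=\deg a-1$ for its degree in $A[1]$, where $\deg a$ is its degree in $A$. $\mathrm{Hom}^0$ denotes degree-preserving linear maps. A multilinear map $f: A[1]^{\otimes l}\to A'[1]$ is called normal if $f(a_1,\dots,a_l)=0$ whenever some argument $a_i$ equals the unit $1\in A$. *)

(* Defs.v *)
From HB Require Import structures.
From mathcomp Require Import all_boot all_order all_algebra.
From mathcomp Require Export reals.
Set Implicit Arguments. Unset Strict Implicit. Unset Printing Implicit Defensive.
Import Order.TTheory GRing.Theory Num.Theory.
Local Open Scope ring_scope.

(* A unital (associative) Z-graded dg-algebra over a field R:
   the carrier is an algebra A; [hom n a] means "a is homogeneous of degree n". *)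
Record dga (R : fieldType) (A : algType R) := DGA {
  hom : int -> pred A;
  hom0 : forall n, hom n 0;
  homD : forall n (c : R) x y, hom n x -> hom n y -> hom n (c *: x + y);
  hom_span : forall a : A, exists (s : seq int) (c : int -> A),
      [/\ uniq s, (forall m, hom m (c m)) & a = \sum_(m <- s) c m];
  hom_indep : forall (s : seq int) (c : int -> A), uniq s ->
      (forall m, hom m (c m)) -> \sum_(m <- s) c m = 0 ->
      forall m, m \in s -> c m = 0;
  hom_one : hom 0 1;
  hom_mul : forall m n a b, hom m a -> hom n b -> hom (m + n) (a * b);
  dif : A -> A;
  dif_lin : forall (c : R) x y, dif (c *: x + y) = c *: dif x + dif y;
  dif_hom : forall n a, hom n a -> hom (n + 1) (dif a);
  dif_sq : forall a, dif (dif a) = 0;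
  dif_leib : forall n a b, hom n a ->
      dif (a * b) = dif a * b + ((-1) ^ n) *: (a * dif b)
}.

Section Maps.
Variables (R : fieldType) (A A' : algType R) (GA : dga A) (GA' : dga A').

(* A k-ary map A[1]^{(x)k} -> A'[1] is represented by a function on
   sequences of length k. *)

Definition multilinear (k : nat) (F : seq A -> A') :=
  forall (s t : seq A) (c : R) (x y : A), (size s + size t).+1 = k ->
    F (s ++ (c *: x + y) :: t) = c *: F (s ++ x :: t) + F (s ++ y :: t).

(* homogeneous tuples: a_j has (unshifted) degree n_j *)
Definition homtuple (k : nat) (a : seq A) (n : seq int) :=
  [/\ size a = k, size n = k & forall j, (j < k)%N -> hom GA (nth 0 n j) (nth 0 a j)].

(* degree 0 in the shifted grading: shifted degrees sum, i.e.
   deg' F(a_1..a_k) - 1 = sum_j (deg a_j - 1) *)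
Definition preserves_shifted_degree (k : nat) (F : seq A -> A') :=
  forall a n, homtuple k a n ->
    hom GA' ((\sum_(m <- n) (m - 1)) + 1) (F a).

Definition Hom0 (k : nat) (F : seq A -> A') :=
  multilinear k F /\ preserves_shifted_degree k F.

Definition normal (k : nat) (F : seq A -> A') :=
  forall a : seq A, size a = k ->
    (exists2 j, (j < k)%N & nth 0 a j = 1) -> F a = 0.

Definition shsign (n : seq int) (i : nat) : R :=
  (-1) ^ (\sum_(m <- take i n) (m - 1)).

(* Psi_l[f_1,...,f_{l-1}] evaluated on a homogeneous tuple a (degrees n),
   with 0-based indexing: a_i a_{i+1} (1-based) = nth (i-1) a * nth i a. *)
Definition Psi (l : nat) (f : nat -> seq A -> A') (a : seq A) (n : seq int) : A' :=
  \sum_(1 <= i < l)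
     shsign n i *: f l.-1 (take i.-1 a ++ (nth 0 a i.-1 * nth 0 a i) :: drop i.+1 a)
  - \sum_(1 <= i < l)
     shsign n i *: (f i (take i a) * f (l - i)%N (drop i a)).

(* Psi_l is normal: it vanishes on every homogeneous l-tuple one of whose
   entries is the unit (Psi_l is the multilinear extension of this formula). *)
Definition Psi_normal (l : nat) (f : nat -> seq A -> A') :=
  forall a n, homtuple l a n ->
    (exists2 j, (j < l)%N & nth 0 a j = 1) -> Psi l f a n = 0.

End Maps.

(* Main.v *)
Require Import Defs.
From HB Require Import structures.
From mathcomp Require Import all_boot all_order all_algebra.
From mathcomp Require Import reals.
From mathcomp Require Import zify.
Local Open Scope ring_scope.
Import GRing.Theory.

Lemma mem_take1 (T : eqType) (x0 x : T) (s : seq T) j k :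
  (j < size s)%N -> nth x0 s j = x -> (j < k)%N -> x \in take k s.
Proof.
move=> js hx jk; rewrite -hx -(nth_take x0 jk); apply: mem_nth.
rewrite size_take; case: ifP => //; lia.
Qed.

Lemma mem_drop1 (T : eqType) (x0 x : T) (s : seq T) j k :
  (j < size s)%N -> nth x0 s j = x -> (k <= j)%N -> x \in drop k s.
Proof.
move=> js hx kj; rewrite -hx.
have -> : j = (k + (j - k))%N by lia.
rewrite -nth_drop; apply: mem_nth; rewrite size_drop; lia.
Qed.

Lemma normal_mem (R : fieldType) (A A' : algType R) k (F : seq A -> A') s :
  normal k F -> size s = k -> 1 \in s -> F s = 0.
Proof.
move=> hN hs h1; apply: hN => //; exists (index 1 s).
  by rewrite -hs index_mem.
exact: nth_index.
Qed.

Lemma one_deg (R : fieldType) (A : algType R) (GA : dga A) m :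
  Defs.hom GA m 1 -> m = 0.
Proof.
move=> hm; apply/eqP; apply/negPn/negP => m0.
pose c := fun k : int => if k == m then (1 : A) else if k == 0 then -1 else 0.
have := @hom_indep _ _ GA [:: m; 0] c.
have u : uniq [:: m; 0] by rewrite /= inE m0.
have hc : forall k, Defs.hom GA k (c k).
  move=> k; rewrite /c; case: eqP => [->//|_]; case: eqP => [->|_]; last exact: hom0.
  by have := @homD _ _ GA 0 (-1) 1 0 (hom_one GA) (hom0 GA 0); rewrite addr0 scaleN1r.
move=> /(_ u hc).
rewrite !big_cons big_nil /c eqxx eq_sym (negbTE m0) eqxx addr0 subrr => /(_ erefl m).
by rewrite inE eqxx => /(_ isT) /eqP; rewrite oner_eq0.
Qed.

Lemma sum_one (V : zmodType) (F : nat -> V) j m n :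
  (forall i, (m <= i < n)%N -> i != j -> F i = 0) ->
  \sum_(m <= i < n) F i = if (m <= j < n)%N then F j else 0.
Proof.
move=> h; rewrite -(@big_nat1_eq _ 0 +%R) big_mkcond /=; apply: eq_big_nat => i hi.
by case: eqP => [->//|/eqP ne]; rewrite h.
Qed.

Lemma sum_two (V : zmodType) (F : nat -> V) j k m n : j != k ->
  (forall i, (m <= i < n)%N -> i != j -> i != k -> F i = 0) ->
  \sum_(m <= i < n) F i = (if (m <= j < n)%N then F j else 0)
                        + (if (m <= k < n)%N then F k else 0).
Proof.
move=> jk h; rewrite -!(@big_nat1_eq _ 0 +%R) big_mkcond [X in _ + X]big_mkcond -big_split /=.
apply: eq_big_nat => i hi.
case: (eqVneq i j) => [->|ij]; first by rewrite (negbTE jk) addr0.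
case: (eqVneq i k) => [->|ik]; first by rewrite add0r.
by rewrite addr0 h.
Qed.

Theorem proposition2 (R : realType) (A A' : algType R)
  (GA : dga A) (GA' : dga A') (l : nat) (hl : (2 <= l)%N)
  (f : nat -> seq A -> A')
  (hHom : forall i, (1 <= i < l)%N -> Hom0 GA GA' i (f i))
  (hunit : f 1%N [:: 1] = 1)
  (hnormal : forall i, (2 <= i < l)%N -> normal i (f i)) :
  Psi_normal GA l f.
Proof.
move=> a n [sa sn hn] [j jl aj1].
rewrite /Psi.
have G0 : forall i, (1 <= i < l)%N -> ~~ ((i == 1%N) && (j == 0%N)) ->
    ~~ ((i == l.-1) && (j == l.-1)) ->
    @shsign R n i *: (f i (take i a) * f (l - i)%N (drop i a)) = 0.
  move=> i hi h1 h2; case/andP: (hi) => i1 il.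
  case: (ltnP j i) => ji.
    rewrite (@normal_mem _ _ _ i (f i)) ?mul0r ?scaler0 //.
    - apply: hnormal; move: h1; rewrite negb_and; case/orP => /eqP; rewrite ?sa; lia.
    - rewrite size_takel ?sa //; case/andP: hi => ? ?; rewrite ?sa; lia.
    - apply: (@mem_take1 A 0 1 a j) => //; rewrite ?sa; rewrite ?sa; lia.
  rewrite (@normal_mem _ _ _ (l - i)%N (f (l - i)%N) (drop i a)) ?mulr0 ?scaler0 //.
  - apply: hnormal; move: h2; rewrite negb_and; case/orP => /eqP; rewrite ?sa; lia.
  - rewrite size_drop; rewrite ?sa; lia.
  - apply: (@mem_drop1 A 0 1 a j) => //; rewrite ?sa; lia.
have F0 : forall i, (1 <= i < l)%N -> i != j -> i != j.+1 ->
    @shsign R n i *: f l.-1 (take i.-1 a ++ (nth 0 a i.-1 * nth 0 a i) :: drop i.+1 a) = 0.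
  move=> i hi ij ij1; case/andP: (hi) => i1 il.
  rewrite (@normal_mem _ _ _ l.-1 (f l.-1)) ?scaler0 //.
  - apply: hnormal; move: ij ij1 => /eqP ? /eqP ?; rewrite ?sa; lia.
  - rewrite size_cat /= size_takel ?size_drop; rewrite ?sa; lia.
  - rewrite mem_cat; apply/orP; case: (ltnP j i.-1) => ji.
      left; apply: (@mem_take1 A 0 1 a j) => //; rewrite ?sa; lia.
    right; rewrite inE; apply/orP; right.
    apply: (@mem_drop1 A 0 1 a j) => //; move: ij ij1 => /eqP ? /eqP ?; rewrite ?sa; lia.
have nj0 : nth 0 n j = 0 by apply: (@one_deg R A GA); rewrite -aj1; apply: hn.
case: (eqVneq j 0%N) => [j0|jn0].
  subst j.
  rewrite (@sum_two _ _ 0%N 1%N); [|by []|by move=> i hi h1 h2; apply: F0].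
  rewrite (@sum_one _ _ 1%N); last first.
    move=> i /andP[i1 il] /eqP ne; apply: G0; rewrite ?i1 ?il //;
    apply/negP => /andP[/eqP ? /eqP ?]; lia.
  rewrite /= add0r (_ : (1 < l)%N) //.
  case: a sa aj1 {hn F0 G0} => [|a0 a'] sa; first by rewrite -sa in hl.
  move=> /= ->.
  case: a' sa => [|a1 a''] sa; first by rewrite -sa in hl.
  by rewrite /= hunit !mul1r subn1 /= drop0 subrr.
case: (eqVneq j l.-1) => [jl1|jnl].
  subst j.
  rewrite (@sum_two _ _ l.-1 l); [|by apply/eqP; lia
     |by move=> i hi h1 h2; apply: F0 => //; rewrite prednK //; lia].
  rewrite (@sum_one _ _ l.-1); last first.
    move=> i /andP[i1 il] /eqP ne; apply: G0; rewrite ?i1 ?il //;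
    apply/negP => /andP[/eqP ? /eqP ?]; lia.
  rewrite ltnn andbF addr0 (_ : (1 <= l.-1 < l)%N); last by apply/andP; split; lia.
  rewrite (_ : (l - l.-1)%N = 1%N); last by lia.
  rewrite (drop_nth 0 (n := l.-1)); last by rewrite sa; lia.
  rewrite aj1 (_ : l.-1.+1 = l); last by lia.
  rewrite drop_oversize ?sa // hunit mulr1.
  rewrite (_ : l.-1 = (l.-2).+1); last by lia.
  rewrite (take_nth 0 (n := l.-2)); last by rewrite sa; lia.
  by rewrite -cats1 /= mulr1 subrr.
have -> : \sum_(1 <= i < l) @shsign R n i *: (f i (take i a) * f (l - i)%N (drop i a)) = 0.
  rewrite big_nat_cond big1 //.
  move=> i /andP[/andP[i1 il] _]; apply: G0; rewrite ?i1 ?il //;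
  apply/negP => /andP[/eqP ? /eqP ?]; lia.
rewrite subr0 (@sum_two _ _ j j.+1); [|by apply/eqP; lia
   |by move=> i hi h1 h2; apply: F0].
rewrite (_ : (1 <= j < l)%N); last by apply/andP; split; lia.
rewrite (_ : (1 <= j.+1 < l)%N); last by apply/andP; split; lia.
rewrite aj1 mulr1 mul1r.
have -> : @shsign R n j.+1 = - @shsign R n j.
  rewrite /shsign (take_nth 0 (n := j)); last by rewrite sn.
  rewrite big_rcons /= nj0 sub0r exprzDr ?unitrN1 // exprN1 invrN1 mulrN1 //.
rewrite -(drop_nth 0 (n := j.+1)); last by rewrite sa; lia.
have -> : take j.-1 a ++ nth 0 a j.-1 :: drop j.+1 a = take j a ++ drop j.+1 a.
  have hj : (j.-1 < size a)%N by rewrite sa; lia.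
  rewrite -cat_rcons -(take_nth 0 hj) prednK //; lia.
by rewrite scaleNr subrr.
Qed.
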